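(* Let $f_0(2)=f_0(3)=1$ and $f_0(n)=0$ for all other $n\ge1$, and let $m\ge1$. For $n>3$ and $1\le k\le n$, $c_m(n,k)$ equals the number of words of length $n-1$ over the alphabet $\{0,1,\ldots,m\}$ with exactly $k-1$ letters equal to $1$, which begin with $0$ and end with $0$, which contain no run of more than $2$ consecutive zeros, and in which all nonzero letters are isolated (no two nonzero letters are adjacent).
   Context: For $m\ge 1$, $f_m$ is the invert transform of $f_{m-1}$, i.e. $f_m(n)=f_{m-1}(n)+\sum_{i=1}^{n-1}f_{m-1}(i)f_m(n-i)$ for $n\ge1$. For $m\ge1$ the numbers $c_m(n,k)$, $0\le k\le n$, are defined by $c_m(0,0)=1$, $c_m(n,0)=0$ for $n\ge1$, and $c_m(n,k)=\sum_{i=1}^{n-k+1}f_{m-1}(i)\,c_m(n-i,k-1)$ for $1\le k\le n$. *)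

(* Defs.v *)
From mathcomp Require Import all_boot.
Set Implicit Arguments. Unset Strict Implicit. Unset Printing Implicit Defensive.

Definition f0 (n : nat) : nat := if (n == 2) || (n == 3) then 1 else 0.

(* inv_list g n = [:: h 0; h 1; ...; h n] where h is the invert transform of g:
   h n = g n + \sum_{i=1}^{n-1} g i * h (n - i) for n >= 1 (h 0 := 0, unused). *)
Fixpoint inv_list (g : nat -> nat) (n : nat) : seq nat :=
  match n with
  | 0 => [:: 0]
  | n'.+1 =>
      let s := inv_list g n' in
      rcons s (g n'.+1 + \sum_(1 <= i < n'.+1) g i * nth 0 s (n'.+1 - i))
  end.

Definition invert (g : nat -> nat) (n : nat) : nat := nth 0 (inv_list g n) n.

Fixpoint f (m : nat) : nat -> nat :=
  match m with
  | 0 => f0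
  | m'.+1 => invert (f m')
  end.

(* c_aux fuel g n k computes the numbers defined by
   c(0,0)=1, c(n,0)=0 (n>=1), c(n,k) = \sum_{i=1}^{n-k+1} g i * c(n-i,k-1),
   correctly whenever fuel >= n. *)
Fixpoint c_aux (fuel : nat) (g : nat -> nat) (n k : nat) : nat :=
  match fuel with
  | 0 => ((n == 0) && (k == 0) : nat)
  | fuel'.+1 =>
      if n is 0 then (k == 0 : nat) else
      if k is k'.+1 then \sum_(1 <= i < (n - k').+1) g i * c_aux fuel' g (n - i) k'
      else 0
  end.

Definition c (m n k : nat) : nat := c_aux n (f m.-1) n k.

Definition good_word (k : nat) (w : seq nat) : bool :=
  [&& count (pred1 1) w == k.-1,
      head 1 w == 0,
      last 1 w == 0,
      [forall i : 'I_(size w),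
         (i.+2 < size w) ==>
         ~~ [&& nth 0 w i == 0, nth 0 w i.+1 == 0 & nth 0 w i.+2 == 0]] &
      [forall i : 'I_(size w),
         (i.+1 < size w) ==> ((nth 0 w i == 0) || (nth 0 w i.+1 == 0))]].

(* Main.v *)
Require Import Defs.
From mathcomp Require Import all_boot all_algebra.
From Stdlib Require Import FunctionalExtensionality Lia.
From mathcomp Require Import zify.
Import GRing.Theory.

Definition conv (a b : nat -> nat) : nat -> nat :=
  fun n => \sum_(i < n.+1) a i * b (n - i).

Definition P (N : nat) (a : nat -> nat) : {poly nat} := \poly_(i < N.+1) a i.

Lemma convP N a b n : n <= N -> conv a b n = ((P N a * P N b)`_n)%R.
Proof.
move=> hn; rewrite coefM /conv; apply: eq_bigr => [[i hi]] _ /=.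
rewrite !coef_poly.
have -> : i < N.+1 by apply: leq_trans hi _.
have -> : n - i < N.+1 by rewrite ltnS (leq_trans (leq_subr _ _) hn).
by [].
Qed.

Lemma coefM_congr (p p' q q' : {poly nat}) n :
  (forall i, i <= n -> (p`_i = p'`_i)%R) -> (forall i, i <= n -> (q`_i = q'`_i)%R) ->
  ((p * q)`_n = (p' * q')`_n)%R.
Proof.
move=> hp hq; rewrite !coefM; apply: eq_bigr => [[i hi]] _ /=.
by rewrite hp -1?ltnS // hq // leq_subr.
Qed.

Lemma conv_comm a b : conv a b = conv b a.
Proof.
apply: functional_extensionality => n.
by rewrite !(convP n) // mulrC.
Qed.

Lemma conv_assoc a b c : conv (conv a b) c = conv a (conv b c).
Proof.
apply: functional_extensionality => n.
rewrite (convP n) // (convP n a) //.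
rewrite (@coefM_congr _ (P n a * P n b) _ (P n c) n); last first.
- by [].
- move=> i hi; rewrite coef_poly ltnS (leq_trans hi) // (convP n) //.
rewrite -mulrA; apply: coefM_congr => // i hi.
by rewrite coef_poly ltnS (leq_trans hi) // (convP n) //.
Qed.

Lemma conv_addl a b c :
  conv (fun n => a n + b n) c = fun n => conv a c n + conv b c n.
Proof.
apply: functional_extensionality => n.
by rewrite /conv -big_split; apply: eq_bigr => i _; rewrite mulnDl.
Qed.

Lemma conv_scalel k a c :
  conv (fun n => k * a n) c = fun n => k * conv a c n.
Proof.
apply: functional_extensionality => n.
by rewrite /conv big_distrr; apply: eq_bigr => i _ /=; rewrite mulnA.
Qed.

Lemma conv_addr a b c :
  conv c (fun n => a n + b n) = fun n => conv c a n + conv c b n.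
Proof. by rewrite conv_comm conv_addl (conv_comm a) (conv_comm b). Qed.

Lemma conv_f0 X n : conv f0 X n.+2 = X n + (if n is n'.+1 then X n' else 0).
Proof.
rewrite /conv; case: n => [|n].
  by rewrite !big_ord_recl big_ord0 !lift0 /f0 /= subn0 !addn0 mul1n.
rewrite !big_ord_recl big1 => [|i _]; last by rewrite !lift0 /f0.
by rewrite !lift0 /f0 /= !subSS !subn0 !mul0n !mul1n !add0n addn0.
Qed.

Lemma size_inv_list g n : size (inv_list g n) = n.+1.
Proof. by elim: n => [|n IH] //=; rewrite size_rcons IH. Qed.

Lemma nth_inv_list g n i : i <= n -> nth 0 (inv_list g n) i = invert g i.
Proof.
elim: n => [|n IH] hi; first by move: hi; rewrite leqn0 => /eqP ->.
rewrite leq_eqVlt in hi; case/orP: hi => [/eqP -> //|hi].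
by rewrite /= nth_rcons size_inv_list hi IH.
Qed.

Lemma invert0 g : invert g 0 = 0. Proof. by []. Qed.

Lemma invert_eq g n : g 0 = 0 -> invert g n = g n + conv g (invert g) n.
Proof.
move=> g0; case: n => [|n]; first by rewrite /conv big_ord_recl big_ord0 g0.
rewrite {1}/invert /= nth_rcons size_inv_list ltnn eqxx; congr (_ + _).
rewrite /conv big_ord_recl g0 mul0n add0n big_ord_recr /= subnn invert0 muln0 addn0.
rewrite big_add1 /= big_mkord; apply: eq_bigr => [[i hi]] _ /=.
rewrite nth_inv_list //; last by rewrite subSS leq_subr.

Qed.

Lemma f_zero j : f j 0 = 0.
Proof. by case: j. Qed.

Lemma f_rec j : f j = fun n => f0 n + j * conv f0 (f j) n.
Proof.
elim: j => [|j IH].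
  by apply: functional_extensionality => n; rewrite mul0n addn0.
set g := f j in IH *.
have g0 : g 0 = 0 by apply: f_zero.
have hE : f j.+1 = invert g by [].
rewrite hE; set h := invert g.
have e1 : h = fun n => g n + conv g h n.
  by apply: functional_extensionality => n; apply: invert_eq.
have E : conv g h = fun n => conv f0 h n + j * conv f0 (conv g h) n.
  by rewrite {1}IH conv_addl conv_scalel conv_assoc.
apply: functional_extensionality => n.
have e2 : conv f0 h n = conv f0 g n + conv f0 (conv g h) n.
  by rewrite {1}e1 conv_addr.
rewrite {1}e1 E {1}IH /= e2.
rewrite mulSn mulnDr; lia.
Qed.

Lemma c_aux_fuel g f1 f2 n k : n <= f1 -> n <= f2 -> c_aux f1 g n k = c_aux f2 g n k.
Proof.
elim: f1 f2 n k => [|f1 IH] [|f2] n k h1 h2.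
- by [].
- by move: h1; rewrite leqn0 => /eqP ->.
- by move: h2; rewrite leqn0 => /eqP ->.
- case: n h1 h2 => [|n] h1 h2 //=.
  case: k => [|k] //.
  apply: eq_big_nat => i /andP[i1 i2]; congr (_ * _); apply: IH.
  + by move: h1 i1; clear; lia.
  + by move: h2 i1; clear; lia.
Qed.

Definition C g k n := c_aux n g n k.

Lemma C_small g k n : n < k -> C g k n = 0.
Proof.
rewrite /C; case: n => [|n]; first by case: k.
case: k => [|k] // hk /=.
have -> : n.+1 - k = 0 by apply/eqP; rewrite subn_eq0.
by rewrite big_geq.
Qed.

Lemma C0 g n : C g 0 n = (n == 0).
Proof. by case: n. Qed.

Lemma C_succ g k : g 0 = 0 -> C g k.+1 = conv g (C g k).
Proof.
move=> g0; apply: functional_extensionality => n.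
case: n => [|n]; first by rewrite /conv big_ord1 g0.
rewrite {1}/C /= /conv -(big_mkord xpredT (fun i => g i * C g k (n.+1 - i))).
symmetry.
rewrite (big_cat_nat _ (n := 1)) //= big_nat1 g0 mul0n add0n.
rewrite (big_cat_nat _ (n := (n.+1 - k).+1)) //=; last by rewrite ltnS leq_subr.
rewrite [X in _ + X]big1_seq ?addn0 => [|i]; last first.
  rewrite mem_index_iota => /andP[i1 i2].
  rewrite C_small ?muln0 //.
  by move: i1 i2; clear; lia.
apply: eq_big_nat => i /andP[i1 i2]; congr (_ * _).
rewrite /C; apply: c_aux_fuel => //.
by move: i1; clear; lia.
Qed.

Definition spec m' (X : nat -> nat -> nat) :=
  [/\ (forall j, X j 0 = 0), (forall j, X j 1 = 0) &
   (forall j n, X j n.+2 =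
     (if j is j'.+1 then X j' n + (if n is n'.+1 then X j' n' else 0) else f0 n.+2)
     + m' * (X j n + (if n is n'.+1 then X j n' else 0)))].

Lemma spec_uniq m' X Y : spec m' X -> spec m' Y -> forall j n, X j n = Y j n.
Proof.
case=> X0 X1 XS [Y0 Y1 YS] j n.
elim: n {-2}n (leqnn n) j => [|N IH] n hn j.
  by move: hn; rewrite leqn0 => /eqP ->; rewrite X0 Y0.
case: n hn => [|[|n]] hn; first by rewrite X0 Y0.
  by rewrite X1 Y1.
rewrite XS YS.
have h1 : n <= N by move: hn; clear; lia.
have h2 : n.-1 <= N by move: hn; clear; lia.
by case: j => [|j]; rewrite !IH //; clear hn; case: n h1 h2 => [|n] h1 h2 //; rewrite !IH.
Qed.

Lemma f_one j : f j 1 = 0.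
Proof. by rewrite f_rec /conv !big_ord_recl big_ord0 /f0 /= !muln0. Qed.

Lemma spec_c m' : spec m' (fun j n => c m'.+1 n j.+1).
Proof.
set g := f m'.
have g0 : g 0 = 0 by apply: f_zero.
have g1 : g 1 = 0 by apply: f_one.
have cE j n : c m'.+1 n j.+1 = C g j.+1 n by [].
split => [j|j|j n]; rewrite ?cE.
- by [].
- by rewrite C_succ // /conv big_ord_recl big_ord1 lift0 g0 g1.
have key k : C g k.+1 = fun n => conv f0 (C g k) n + m' * conv f0 (C g k.+1) n.
  rewrite C_succ // {1}/g (f_rec m') conv_addl conv_scalel conv_assoc -C_succ //.
rewrite {1}key !conv_f0.
case: j => [|j]; last by [].
by congr (_ + _); case: n => [|[|n]]; rewrite ?C0.
Qed.
Fixpoint enumw m L : seq (seq nat) :=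
  if L is L'.+1 then [seq x :: w | x <- iota 0 m.+1, w <- enumw m L'] else [:: [::]].

Definition A3 (w : seq nat) := all (fun i => (i.+2 < size w) ==>
  ~~ [&& nth 0 w i == 0, nth 0 w i.+1 == 0 & nth 0 w i.+2 == 0]) (iota 0 (size w)).
Definition Ai (w : seq nat) := all (fun i => (i.+1 < size w) ==>
  ((nth 0 w i == 0) || (nth 0 w i.+1 == 0))) (iota 0 (size w)).
Definition good0 w := [&& head 1 w == 0, last 1 w == 0, A3 w & Ai w].

Lemma iota0S n : iota 0 n.+1 = 0 :: map S (iota 0 n).
Proof. by rewrite /= -add1n iotaDl. Qed.

Lemma A3_cons x w : A3 (x :: w) =
  ((2 < (size w).+1) ==> ~~ [&& x == 0, nth 0 w 0 == 0 & nth 0 w 1 == 0]) && A3 w.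
Proof.
rewrite /A3 (_ : size (x :: w) = (size w).+1) // iota0S /= all_map.
by congr andb; apply: eq_all => i /=.
Qed.

Lemma Ai_cons x w : Ai (x :: w) =
  ((1 < (size w).+1) ==> ((x == 0) || (nth 0 w 0 == 0))) && Ai w.
Proof.
rewrite /Ai (_ : size (x :: w) = (size w).+1) // iota0S /= all_map.
by congr andb; apply: eq_all => i.
Qed.

Lemma G1 x w : x != 0 -> good0 (x :: w) = false.
Proof. by move=> hx; rewrite /good0 /= (negbTE hx). Qed.

Lemma G2 x w : x != 0 -> good0 (0 :: x :: w) = good0 w.
Proof.
move=> hx; rewrite /good0 A3_cons Ai_cons A3_cons Ai_cons /= (negbTE hx) /=.
case: w => [|y w] /=; first by rewrite (negbTE hx).
by rewrite implybT /=; case: (y == 0); case: (last y w == 0); rewrite ?andbF ?andbT.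
Qed.

Lemma G3 w : good0 (0 :: 0 :: 0 :: w) = false.
Proof. by rewrite /good0 A3_cons /= andbF. Qed.

Lemma G4 x w : x != 0 -> good0 (0 :: 0 :: x :: w) = good0 w.
Proof.
move=> hx; rewrite -(@G2 x w hx) /good0 A3_cons Ai_cons /= (negbTE hx) /=.
by [].
Qed.

Lemma count_allpairs_cons (Q : pred (seq nat)) (s : seq nat) t :
  count Q [seq x :: w | x <- s, w <- t] = \sum_(x <- s) count (fun w => Q (x :: w)) t.
Proof.
elim: s => [|x s IH]; first by rewrite big_nil.
by rewrite big_cons -IH /= count_cat count_map.
Qed.

Lemma enumwS m L : enumw m L.+1 = [seq x :: w | x <- iota 0 m.+1, w <- enumw m L].
Proof. by []. Qed.

Definition cnt m L j := count (fun w => good0 w && (count (pred1 1) w == j)) (enumw m L).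
Definition h1 m L j := count (fun w => good0 (0 :: w) && (count (pred1 1) w == j)) (enumw m L).
Definition h2 m L j := count (fun w => good0 (0 :: 0 :: w) && (count (pred1 1) w == j)) (enumw m L).
Definition Sfun m' L j := (if j is j'.+1 then cnt m'.+1 L j' else 0) + m' * cnt m'.+1 L j.

Lemma sum_nonzero m' L j :
  \sum_(x <- iota 1 m'.+1)
     count (fun w => good0 w && ((x == 1) + count (pred1 1) w == j)) (enumw m'.+1 L)
  = Sfun m' L j.
Proof.
rewrite /= big_cons /Sfun; congr (_ + _).
  case: j => [|j]; rewrite /cnt.
    rewrite (eq_count (a2 := pred0)) ?count_pred0 // => w /=.
    by rewrite add1n andbF.
  by apply/eq_count => w /=; rewrite add1n eqSS.
rewrite (eq_big_seq (fun _ => cnt m'.+1 L j)) => [|x]; last first.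
  rewrite mem_iota => /andP[h _]; apply/eq_count => w /=.
  have -> : (x == 1) = false by apply/negbTE; rewrite neq_ltn h orbT.
  by rewrite add0n.
by rewrite big_const_seq count_predT size_iota iter_addn_0 mulnC.
Qed.

Lemma cnt_S m L j : cnt m L.+1 j = h1 m L j.
Proof.
rewrite /cnt enumwS count_allpairs_cons (_ : iota 0 m.+1 = 0 :: iota 1 m) //.
rewrite big_cons big1_seq ?addn0 => [|x]; last first.
  move=> /andP[_]; rewrite mem_iota => /andP[h _].
  rewrite (eq_count (a2 := pred0)) ?count_pred0 // => w /=.
  by rewrite G1 // -lt0n.
by rewrite /h1; apply/eq_count => w /=; rewrite add0n.
Qed.

Lemma h1_S m' L j : h1 m'.+1 L.+1 j = h2 m'.+1 L j + Sfun m' L j.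
Proof.
rewrite /h1 enumwS count_allpairs_cons /= -/(iota 1 m'.+1) big_cons -sum_nonzero.
congr (_ + _).
apply: eq_big_seq => x; rewrite mem_iota => /andP[h _].
by apply/eq_count => w /=; rewrite G2 // -lt0n.
Qed.

Lemma h2_S m' L j : h2 m'.+1 L.+1 j = Sfun m' L j.
Proof.
rewrite /h2 enumwS count_allpairs_cons /= -/(iota 1 m'.+1) big_cons -sum_nonzero.
rewrite (eq_count (a2 := pred0)) ?count_pred0 ?add0n => [|w]; last by rewrite /= G3.
apply: eq_big_seq => x; rewrite mem_iota => /andP[h _].
by apply/eq_count => w /=; rewrite G4 // -lt0n.
Qed.

Lemma h1_0 m j : h1 m 0 j = (j == 0).
Proof. by rewrite /h1 /= eq_sym; case: (j == 0). Qed.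

Lemma h2_0 m j : h2 m 0 j = (j == 0).
Proof. by rewrite /h2 /= eq_sym; case: (j == 0). Qed.

Lemma cnt_0 m j : cnt m 0 j = 0.
Proof. by []. Qed.
Lemma mem_enumw m L w : (w \in enumw m L) = (size w == L) && all (fun x => x < m.+1) w.
Proof.
elim: L w => [|L IH] w; first by case: w.
rewrite enumwS.
apply/allpairsP/idP => [[[y v] /= [hy hv ->]]|].
  move: hv hy; rewrite IH -[0 :: iota 1 m]/(iota 0 m.+1) mem_iota.
  by rewrite /= eqSS add0n => /andP[-> ->] ->.
case: w => [|x w] //= /andP[hs /andP[hx ha]].
exists (x, w); split; [by rewrite (_ : 0 :: iota 1 m = iota 0 m.+1) // mem_iota | | by []].
by rewrite /= IH -(eqSS _ L) hs ha.
Qed.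

Lemma uniq_enumw m L : uniq (enumw m L).
Proof.
elim: L => [|L IH] //.
rewrite enumwS; apply: allpairs_uniq => //; first exact: iota_uniq.
by move=> [a b] [c d] _ _ /= [-> ->].
Qed.

Lemma card_words m L (Q : pred (seq nat)) :
  #|[set w : L.-tuple 'I_m.+1 | Q (map (@nat_of_ord m.+1) w)]| = count Q (enumw m L).
Proof.
rewrite cardsE cardE /enum_mem size_filter -enumT.
rewrite -(count_map (fun w : L.-tuple 'I_m.+1 => map (@nat_of_ord m.+1) w) Q).
apply: (permP _ Q); apply: uniq_perm.
- rewrite map_inj_uniq ?enum_uniq // => t1 t2 h.
  by apply: val_inj; apply: (inj_map val_inj).
- exact: uniq_enumw.
move=> w; rewrite mem_enumw; apply/mapP/idP => [[t _ ->]|/andP[/eqP hs ha]].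
  rewrite size_map size_tuple eqxx /=.
  by apply/allP => x /mapP[y _ ->].
have hs' : size (map (fun x => inord x : 'I_m.+1) w) == L by rewrite size_map hs.
exists (Tuple hs'); first by rewrite mem_enum.
rewrite /= -map_comp -[LHS]map_id; apply/eq_in_map => x hx /=.
by rewrite inordK // (allP ha).
Qed.

Definition Bn m' n j := if n is n'.+1 then cnt m'.+1 n' j else 0.

Lemma spec_B m' : spec m' (fun j n => Bn m' n j).
Proof.
split => // j n.
rewrite /Bn cnt_S.
case: n => [|[|n]].
- by rewrite h1_0 !addn0 muln0; case: j.
- rewrite h1_S h2_0 /Sfun /=; case: j => [|j] //=.
- rewrite h1_S h2_S /Sfun; case: j => [|j]; rewrite /f0 /=; lia.
Qed.

Lemma forall_iota n (Q : pred nat) : [forall i : 'I_n, Q i] = all Q (iota 0 n).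
Proof.
apply/forallP/allP => [H i|H i].
  by rewrite mem_iota add0n => /andP[_ lt]; exact: (H (Ordinal lt)).
by apply: H; rewrite mem_iota /= ltn_ord.
Qed.

Lemma good_wordE k w : good_word k w = good0 w && (count (pred1 1) w == k.-1).
Proof.
rewrite /good_word /good0.
rewrite (forall_iota (size w) (fun i => (i.+2 < size w) ==>
  ~~ [&& nth 0 w i == 0, nth 0 w i.+1 == 0 & nth 0 w i.+2 == 0])).
rewrite (forall_iota (size w) (fun i => (i.+1 < size w) ==>
  ((nth 0 w i == 0) || (nth 0 w i.+1 == 0)))).
rewrite -/(A3 w) -/(Ai w).
by case: (count _ _ == _); rewrite ?andbT ?andbF.
Qed.

Theorem corollary31 (m n k : nat) :
  1 <= m -> 3 < n -> 1 <= k <= n ->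
  c m n k =
  #|[set w : (n.-1).-tuple 'I_m.+1 | good_word k (map (@nat_of_ord m.+1) w)]|.
Proof.
case: m => [|m'] // _ hn /andP[hk _].
case: k hk => [|j] // _.
case: n hn => [|n] // _.
rewrite card_words.
have -> : count (good_word j.+1) (enumw m'.+1 n) = Bn m' n.+1 j.
  by rewrite /Bn /cnt; apply/eq_count => w; rewrite good_wordE.
by have := @spec_uniq m' _ _ (spec_c m') (spec_B m') j n.+1.
Qed.
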